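(* Let $U\in C^{3}(\mathbb{R}^{d})$ be a Morse function with finitely many critical points satisfying the growth conditions in the context, and let $\boldsymbol{\ell}$ be a smooth vector field with $\nabla U\cdot\boldsymbol{\ell}\equiv0$. For $\epsilon>0$ let $\mathscr{L}_{\epsilon}f=-(\nabla U+\boldsymbol{\ell})\cdot\nabla f+\epsilon\Delta f$. Then for every $\epsilon>0$ there exists $r_{0}=r_{0}(\epsilon)>0$ such that $(\mathscr{L}_{\epsilon}U)(\boldsymbol{x})\le-3$ for all $\boldsymbol{x}\notin\mathcal{D}_{r_{0}}(\boldsymbol{0})$, where $\mathcal{D}_{r}(\boldsymbol{0})$ is the open ball of radius $r$ centered at the origin.
   Context: Growth conditions: $\lim_{n\to\infty}\inf_{|\boldsymbol{x}|\ge n}U(\boldsymbol{x})/|\boldsymbol{x}|=\infty$, $\lim_{|\boldsymbol{x}|\to\infty}\frac{\boldsymbol{x}}{|\boldsymbol{x}|}\cdot\nabla U(\boldsymbol{x})=\infty$, $\lim_{|\boldsymbol{x}|\to\infty}\{|\nabla U(\boldsymbol{x})|-2\Delta U(\boldsymbol{x})\}=\infty$. *)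

(* Defs.v *)
From HB Require Import structures.
From mathcomp Require Import all_boot all_order all_algebra.
From mathcomp Require Import all_classical all_reals all_analysis.
Set Implicit Arguments. Unset Strict Implicit. Unset Printing Implicit Defensive.
Import Order.TTheory GRing.Theory Num.Theory.
Import numFieldNormedType.Exports.
Local Open Scope classical_set_scope.
Local Open Scope ring_scope.

Section Defs.
Variables (R : realType) (d : nat).
Notation V := 'rV[R]_d.

Definition ebasis (i : 'I_d) : V := \row_(j < d) (i == j)%:R.

Definition edot (u v : V) : R := \sum_(i < d) u ord0 i * v ord0 i.
Definition enorm (x : V) : R := Num.sqrt (edot x x).

Definition open_disc0 (r : R) : set V := [set x | enorm x < r].

Definition partial (i : 'I_d) (f : V -> R) : V -> R :=
  fun x => 'D_(ebasis i) f x.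

Fixpoint iter_partial (s : seq 'I_d) (f : V -> R) : V -> R :=
  match s with
  | [::] => f
  | i :: s' => partial i (iter_partial s' f)
  end.

Definition isCk (k : nat) (f : V -> R) : Prop :=
  forall s : seq 'I_d, (size s <= k)%N ->
    continuous (iter_partial s f) /\
    ((size s < k)%N -> forall (i : 'I_d) (x : V),
        derivable (iter_partial s f) x (ebasis i)).

Definition smooth (f : V -> R) : Prop := forall k, isCk k f.

Definition smooth_field (l : V -> V) : Prop :=
  forall i : 'I_d, smooth (fun x => l x ord0 i).

Definition grad (f : V -> R) (x : V) : V := \row_(i < d) partial i f x.
Definition laplacian (f : V -> R) (x : V) : R :=
  \sum_(i < d) partial i (partial i f) x.
Definition hessian (f : V -> R) (x : V) : 'M[R]_d :=
  \matrix_(i < d, j < d) partial i (partial j f) x.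

Definition critical_point (f : V -> R) (x : V) : Prop := grad f x = 0.

Definition morse (f : V -> R) : Prop :=
  forall x, critical_point f x -> \det (hessian f x) != 0.

Definition to_pinfty_at_infty (g : V -> R) : Prop :=
  forall M : R, exists r : R, forall x, r <= enorm x -> M <= g x.

(* lim_{n -> oo} inf_{|x| >= n} U(x)/|x| = oo, unfolded *)
Definition superlinear (U : V -> R) : Prop :=
  forall M : R, exists n : nat, forall x, n%:R <= enorm x -> M <= U x / enorm x.

Definition gen (U : V -> R) (l : V -> V) (eps : R) (f : V -> R) (x : V) : R :=
  - edot (grad U x + l x) (grad f x) + eps * laplacian f x.

End Defs.

(* Main.v *)
Require Import Defs.
From HB Require Import structures.
From mathcomp Require Import all_boot all_order all_algebra.
From mathcomp Require Import all_classical all_reals all_analysis.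
From mathcomp Require Import ring lra.
Import Order.TTheory GRing.Theory Num.Theory.
Import numFieldNormedType.Exports.
Local Open Scope classical_set_scope.
Local Open Scope ring_scope.

Lemma edotDl (R : realType) (d : nat) (a b c : 'rV[R]_d) :
  edot (a + b) c = edot a c + edot b c.
Proof.
rewrite /edot -big_split; apply: eq_bigr => i _; by rewrite mxE mulrDl.
Qed.

Lemma edotC (R : realType) (d : nat) (a b : 'rV[R]_d) : edot a b = edot b a.
Proof. rewrite /edot; apply: eq_bigr => i _; by rewrite mulrC. Qed.

Lemma edot_ge0 (R : realType) (d : nat) (a : 'rV[R]_d) : 0 <= edot a a.
Proof. rewrite /edot; apply: sumr_ge0 => i _; by rewrite -expr2 sqr_ge0. Qed.

Theorem lemma5p1 (R : realType) (d : nat) (U : 'rV[R]_d -> R)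
    (l : 'rV[R]_d -> 'rV[R]_d) :
  isCk 3 U ->
  morse U ->
  finite_set [set x | critical_point U x] ->
  superlinear U ->
  to_pinfty_at_infty (fun x => edot ((enorm x)^-1 *: x) (grad U x)) ->
  to_pinfty_at_infty (fun x => enorm (grad U x) - 2 * laplacian U x) ->
  smooth_field l ->
  (forall x, edot (grad U x) (l x) = 0) ->
  forall eps : R, 0 < eps ->
    exists r0 : R, 0 < r0 /\
      forall x, ~ open_disc0 r0 x -> gen U l eps U x <= -3.
Proof.
move=> _ _ _ _ _ H6 _ Hl eps he.
have [r Hr] := H6 ((6 + eps^+2/8) / eps).
exists (Num.max r 1); split; first by rewrite lt_max ltr01 orbT.
move=> x Hx.
have hx : r <= enorm x.
  have : Num.max r 1 <= enorm x by rewrite leNgt; apply/negP.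
  by rewrite ge_max => /andP[].
have HM := Hr x hx; move: HM => /=.
rewrite /gen edotDl (@edotC _ _ (l x)) Hl addr0.
have t0 : 0 <= enorm (grad U x) by rewrite /enorm sqrtr_ge0.
have tsq : enorm (grad U x) ^+ 2 = edot (grad U x) (grad U x).
  by rewrite /enorm sqr_sqrtr // edot_ge0.
rewrite -tsq.
set t := enorm (grad U x); set D := laplacian U x.
have eM : eps * ((6 + eps^+2/8) / eps) = 6 + eps^+2/8.
  by field; rewrite gt_eqF.
move: ((6 + eps^+2/8) / eps) eM => M eM HM.
have h1 : eps * M <= eps * (t - 2 * D) by rewrite ler_pM2l.
have hs : 0 <= t^+2 - (eps*t)/2 + eps^+2/16.
  have -> : t^+2 - (eps*t)/2 + eps^+2/16 = (t - eps/4)^+2 by field.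
  exact: sqr_ge0.
have h2 : eps * (t - 2 * D) = eps * t - 2 * (eps * D) by ring.
rewrite h2 eM in h1.
lra.
Qed.
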